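(* Let $k>0$, let $\lambda$ be a $k$-ineffable$'$ cardinal, and let $g:\lambda^k\to\lambda^k$. Then there exists an infinite set $B\subseteq\lambda$ such that $g$ has at most $\mathrm{ot}(k)$ regressive values on $B^k$.
   Context: Ordinals are von Neumann ordinals, ordered by $<$. For $x\in\lambda^k$, $\min(x)$ and $|x|$ are the least and greatest coordinates; $y$ is a regressive value of $g$ on $B^k$ iff $y=g(x)$ for some $x\in B^k$ with $|y|<\min(x)$. $S_k(X)$ is the set of $k$-element subsets of $X$. A function $f:S_k(\lambda)\to\lambda$ is regressive iff for all $A\in S_k(\lambda)$, $f(A)<\min(A)$ or $\min(A)=0$. $\lambda$ is $k$-ineffable$'$ iff $\lambda$ is an infinite cardinal and for every regressive $f:S_k(\lambda)\to\lambda$ there exists a stationary $A\subseteq\lambda$ such that $f$ is constant on $S_k(A)$. $\mathrm{ot}(k)$ is the number of order types of elements of $\mathbb{N}^k$, where $x,y$ have the same order type iff $x_i<x_j\Leftrightarrow y_i<y_j$ for all $i,j$. *)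

(* Defs.v *)
From Stdlib Require Import List.
From mathcomp Require Import all_boot.
Set Implicit Arguments. Unset Strict Implicit. Unset Printing Implicit Defensive.

(* lambda is represented by a type T equipped with a strict well-order lt;
   (T, lt) is thus isomorphic to a unique von Neumann ordinal lambda. *)
Record wellorder (T : Type) (lt : T -> T -> Prop) : Prop := {
  wo_irrefl : forall x, ~ lt x x;
  wo_trans : forall x y z, lt x y -> lt y z -> lt x z;
  wo_total : forall x y, x = y \/ lt x y \/ lt y x;
  wo_wf : well_founded lt }.

Definition infinite_pred (T : Type) (P : T -> Prop) : Prop :=
  ~ exists s : seq T, forall x, P x -> List.In x s.

(* the ordinal (T,lt) is a cardinal: not in bijection with any smaller ordinal
   (= proper initial segment) *)
Definition is_cardinal (T : Type) (lt : T -> T -> Prop) : Prop :=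
  forall a : T, ~ exists f : T -> {x : T | lt x a}, bijective f.

Definition infinite_cardinal (T : Type) (lt : T -> T -> Prop) : Prop :=
  infinite_pred (fun _ : T => True) /\ is_cardinal lt.

Definition is_zero (T : Type) (lt : T -> T -> Prop) (z : T) : Prop :=
  forall y, ~ lt y z.

(* k-element subsets of lambda are encoded as strictly increasing k-tuples
   (the increasing enumeration of the subset) *)
Definition incr (T : Type) (lt : T -> T -> Prop) (k : nat) (x : 'I_k -> T) : Prop :=
  forall i j : 'I_k, (i < j)%N -> lt (x i) (x j).

Definition regressive_k (T : Type) (lt : T -> T -> Prop) (k : nat)
  (f : ('I_k -> T) -> T) : Prop :=
  forall x, incr lt x ->
    (forall i, lt (f x) (x i)) \/ (exists i, is_zero lt (x i)).

Definition unbounded (T : Type) (lt : T -> T -> Prop) (C : T -> Prop) : Prop :=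
  forall a, exists c, C c /\ (c = a \/ lt a c).

Definition closed (T : Type) (lt : T -> T -> Prop) (C : T -> Prop) : Prop :=
  forall a, (exists b, lt b a) ->
    (forall b, lt b a -> exists c, C c /\ lt b c /\ lt c a) -> C a.

Definition club (T : Type) (lt : T -> T -> Prop) (C : T -> Prop) : Prop :=
  unbounded lt C /\ closed lt C.

Definition stationary (T : Type) (lt : T -> T -> Prop) (A : T -> Prop) : Prop :=
  forall C, club lt C -> exists x, A x /\ C x.

Definition k_ineffable' (T : Type) (lt : T -> T -> Prop) (k : nat) : Prop :=
  infinite_cardinal lt /\
  forall f : ('I_k -> T) -> T, regressive_k lt f ->
    exists A : T -> Prop, stationary lt A /\
      exists c : T, forall x, incr lt x -> (forall i, A (x i)) -> f x = c.

(* y is a regressive value of g on B^k: y = g x, x in B^k, |y| < min x,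
   i.e. every coordinate of y is below every coordinate of x *)
Definition regressive_value (T : Type) (lt : T -> T -> Prop) (k : nat)
  (g : {ffun 'I_k -> T} -> {ffun 'I_k -> T}) (B : T -> Prop)
  (y : {ffun 'I_k -> T}) : Prop :=
  exists x : {ffun 'I_k -> T}, (forall i, B (x i)) /\ y = g x /\
    forall i j, lt (y i) (x j).

Definition same_ot (k : nat) (x y : {ffun 'I_k -> nat}) : Prop :=
  forall i j : 'I_k, (x i < x j)%N = (y i < y j)%N.

Definition ot_class (k : nat) (P : {ffun 'I_k -> nat} -> Prop) : Prop :=
  exists x, P = same_ot x.

(* the set R has at most ot(k) elements: it injects into the set of order
   types of elements of N^k *)
Definition at_most_ot (X : Type) (k : nat) (R : X -> Prop) : Prop :=
  exists h : {y : X | R y} -> {P : {ffun 'I_k -> nat} -> Prop | ot_class P},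
    injective h.

(* Main.v *)
Require Import Defs.
From mathcomp Require Import all_boot.
From Stdlib Require Import ClassicalEpsilon ProofIrrelevance FunctionalExtensionality Lia.
Unset Printing Implicit Defensive.

Definition lb (P : Prop) : bool := if excluded_middle_informative P then true else false.
Lemma lbP (P : Prop) : reflect P (lb P).
Proof. rewrite /lb; case: excluded_middle_informative => h; by constructor. Qed.

Section Basics.
Variable T : Type.
Variable lt : T -> T -> Prop.
Hypothesis Hwo : wellorder lt.

Definition le a b := a = b \/ lt a b.

Lemma ltirr a : ~ lt a a. Proof. exact: (@wo_irrefl _ _ Hwo a). Qed.
Lemma lttr a b c : lt a b -> lt b c -> lt a c. Proof. exact: (@wo_trans _ _ Hwo a b c). Qed.
Lemma lttot a b : a = b \/ lt a b \/ lt b a. Proof. exact: (@wo_total _ _ Hwo a b). Qed.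
Lemma ltasym a b : lt a b -> ~ lt b a.
Proof. move=> h1 h2; exact: (ltirr a (lttr a b a h1 h2)). Qed.
Lemma nlt_le a b : ~ lt a b -> le b a.
Proof. move=> h; case: (lttot a b) => [->|[h'|h']]; [by left|by []|by right]. Qed.
Lemma le_nlt a b : le a b -> ~ lt b a.
Proof. case=> [->|h]; [exact: ltirr|exact: (ltasym a b h)]. Qed.
Lemma lelt a b c : le a b -> lt b c -> lt a c.
Proof. case=> [->//|h]; exact: (lttr a b c h). Qed.
Lemma ltle a b c : lt a b -> le b c -> lt a c.
Proof. move=> h [<-//|h']; exact: (lttr a b c h h'). Qed.
Lemma lele a b c : le a b -> le b c -> le a c.
Proof. case=> [->//|h] h'; right; exact: (ltle a b c h h'). Qed.
Lemma lerefl a : le a a. Proof. by left. Qed.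
Lemma ltW a b : lt a b -> le a b. Proof. by right. Qed.
Lemma le_anti a b : le a b -> le b a -> a = b.
Proof. case=> [//|h] /(le_nlt b a); by []. Qed.

Lemma least_ex (P : T -> Prop) a : P a -> exists m, P m /\ forall y, lt y m -> ~ P y.
Proof.
elim/(well_founded_ind (wo_wf Hwo)): a => a IH Pa.
case: (classic (exists y, lt y a /\ P y)) => [[y [hy Py]]|h].
  exact: IH hy Py.
exists a; split=> // y hy Py; apply: h; by exists y.
Qed.

Definition tmax a b := if excluded_middle_informative (lt a b) then b else a.
Lemma le_tmaxl a b : le a (tmax a b).
Proof. rewrite /tmax; case: excluded_middle_informative => h; [by right|by left]. Qed.
Lemma le_tmaxr a b : le b (tmax a b).
Proof. rewrite /tmax; case: excluded_middle_informative => h; [by left|exact: (nlt_le _ _ h)]. Qed.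
Lemma tmax_cases a b : tmax a b = a \/ tmax a b = b.
Proof. rewrite /tmax; case: excluded_middle_informative; auto. Qed.
End Basics.

Lemma sig_ext (A : Type) (P : A -> Prop) (p q : {x | P x}) : sval p = sval q -> p = q.
Proof.
case: p => x px; case: q => y py /= e; subst y; by rewrite (proof_irrelevance _ px py).
Qed.

Section Main.
Variable T : Type.
Variable lt : T -> T -> Prop.
Variable k : nat.
Hypothesis Hwo : wellorder lt.
Hypothesis hk : (0 < k)%N.
Hypothesis Hin : k_ineffable' lt k.

Notation le := (@le T lt).
Let ltirr a : ~ lt a a := @ltirr T lt Hwo a.
Let lttr a b c : lt a b -> lt b c -> lt a c := @lttr T lt Hwo a b c.
Let lttot a b : a = b \/ lt a b \/ lt b a := @lttot T lt Hwo a b.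
Let ltasym a b : lt a b -> ~ lt b a := @ltasym T lt Hwo a b.
Let nlt_le a b : ~ lt a b -> le b a := @nlt_le T lt Hwo a b.
Let le_nlt a b : le a b -> ~ lt b a := @le_nlt T lt Hwo a b.
Let lelt a b c : le a b -> lt b c -> lt a c := @lelt T lt Hwo a b c.
Let ltle a b c : lt a b -> le b c -> lt a c := @ltle T lt Hwo a b c.
Let lele a b c : le a b -> le b c -> le a c := @lele T lt Hwo a b c.
Let le_anti a b : le a b -> le b a -> a = b := @le_anti T lt Hwo a b.
Arguments ltirr {a}. Arguments lttr {a b c}. Arguments ltasym {a b}. Arguments nlt_le {a b}.
Arguments le_nlt {a b}. Arguments lelt {a b c}. Arguments ltle {a b c}. Arguments lele {a b c}.
Arguments le_anti {a b}.

Lemma Hinf : infinite_pred (fun _ : T => True).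
Proof. by case: Hin => [[]]. Qed.

Lemma inhT : inhabited T.
Proof.
case: (classic (inhabited T)) => // h; exfalso; apply: Hinf; exists [::] => x.
by case: h; constructor.
Qed.

Definition z : T := epsilon inhT (fun m => forall y, ~ lt y m).
Lemma z_spec y : ~ lt y z.
Proof.
have [y0] := inhT.
have := @epsilon_spec _ inhT (fun m => forall y, ~ lt y m); apply.
have [m [_ hm]] := @least_ex T lt Hwo (fun _ => True) y0 I.
by exists m => y' h; exact: (hm _ h I).
Qed.
Lemma z_le y : le z y.
Proof. exact: (nlt_le (z_spec y)). Qed.

Definition nxt a : T := epsilon inhT (fun b => lt a b /\ forall c, lt a c -> le b c).
Lemma nxt_spec a : (exists b, lt a b) -> lt a (nxt a) /\ forall c, lt a c -> le (nxt a) c.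
Proof.
case=> b hb; apply: (@epsilon_spec _ inhT (fun b => lt a b /\ forall c, lt a c -> le b c)).
have [m [hm1 hm2]] := @least_ex T lt Hwo (fun b => lt a b) b hb.
by exists m; split=> // c hc; apply: nlt_le => h; exact: hm2 h hc.
Qed.

Definition e n : T := iter n nxt z.
Arguments e : simpl never.

Lemma cover n : (forall i, (i < n)%N -> exists b, lt (e i) b) ->
  forall t, le t (e n) -> exists i, (i <= n)%N /\ t = e i.
Proof.
elim: n => [|n IH] H t ht.
  exists 0; split=> //; case: ht => // h; by case: (z_spec _ h).
have [h1 h2] := nxt_spec _ (H n (ltnSn n)).
case: ht => [->|ht]; first by exists n.+1.
case: (classic (lt (e n) t)) => h.
  by case: (le_nlt (h2 _ h)).
have [i [hi ->]] := IH (fun i hi => H i (ltnW (leq_trans hi (leqnn _)))) t (nlt_le h).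
by exists i; split=> //; exact: leqW.
Qed.

Lemma allgt_aux n : (forall i, (i < n)%N -> exists b, lt (e i) b) -> exists b, lt (e n) b.
Proof.
move=> H; apply: NNPP => hn; apply: Hinf.
exists (List.map e (List.seq 0 n.+1)) => t _.
have [i [hi ->]] := cover _ H t (nlt_le (fun h => hn (ex_intro _ t h))).
apply: List.in_map; apply/List.in_seq; move/leP: hi; lia.
Qed.

Lemma allgt n : exists b, lt (e n) b.
Proof.
have : forall i, (i <= n)%N -> exists b, lt (e i) b.
  elim: n => [|n IH] i hi.
    by move: hi; rewrite leqn0 => /eqP ->; apply: allgt_aux.
  case: (ltngtP i n.+1) hi => // [hlt _|-> _]; first exact: IH.
  by apply: allgt_aux => j hj; apply: IH.
by apply.
Qed.

Lemma e_lt n : lt (e n) (e n.+1).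
Proof. rewrite /e /=; exact: (nxt_spec _ (allgt n)).1. Qed.

Lemma e_mono i j : (i < j)%N -> lt (e i) (e j).
Proof.
elim: j => // j IH; rewrite ltnS leq_eqVlt => /orP [/eqP ->|h]; first exact: e_lt.
exact: (lttr (IH h) (e_lt j)).
Qed.

Lemma e_inj : injective e.
Proof.
move=> i j h; case: (ltngtP i j) => // hij; [have := e_mono _ _ hij|have := e_mono _ _ hij];
rewrite h => /ltirr [].
Qed.

Lemma nomax a : exists b, lt a b.
Proof.
apply: NNPP => hm.
have hm' : forall b, ~ lt a b by move=> b hb; apply: hm; exists b.
have elt n : lt (e n) a.
  apply: ltle (e_lt n) _; exact: nlt_le (hm' _).
pose fv t := if excluded_middle_informative (t = a) then e 0
  else if excluded_middle_informative (exists n, t = e n)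
    then e (epsilon (inhabits 0) (fun n => t = e n)).+1 else t.
have fv_lt t : lt (fv t) a.
  rewrite /fv; destruct (excluded_middle_informative (t = a)) as [h0|h1]; first exact: elt.
  destruct (excluded_middle_informative (exists n, t = e n)) as [h0|h2]; first exact: elt.
  by case: (lttot t a) => [//|[//|/hm' //]].
pose f t := exist (fun x => lt x a) (fv t) (fv_lt t).
pose gv (y : {x | lt x a}) := let t := sval y in
  if excluded_middle_informative (t = e 0) then a
  else if excluded_middle_informative (exists n, t = e n.+1)
    then e (epsilon (inhabits 0) (fun n => t = e n.+1)) else t.
case: Hin => [[_ Hc] _]; apply: (Hc a); exists f; exists gv.
- move=> t; rewrite /gv /f /= /fv.
  destruct (excluded_middle_informative (t = a)) as [E1|h1]; simpl.
    destruct (excluded_middle_informative (e 0 = e 0)) as [X|C]; simpl; [by rewrite ?E1|by case: C].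
  destruct (excluded_middle_informative (exists n, t = e n)) as [h2|h2]; simpl.
    have hs := @epsilon_spec _ (inhabits 0) (fun n => t = e n) h2.
    move: hs; set n := epsilon _ _ => hs.
    destruct (excluded_middle_informative (e n.+1 = e 0)) as [E|X]; simpl; first by move/e_inj: E.
    destruct (excluded_middle_informative (exists m, e n.+1 = e m.+1)) as [h3|C]; simpl;
      last by case: C; exists n.
    have hs' := @epsilon_spec _ (inhabits 0) (fun m => e n.+1 = e m.+1) h3.
    move: hs'; set m := epsilon _ _ => hs'.
    by move/e_inj: hs' => [<-].
  destruct (excluded_middle_informative (t = e 0)) as [h3|X]; simpl; first by case: h2; exists 0.
  destruct (excluded_middle_informative (exists m, t = e m.+1)) as [[n hn]|Y]; simpl => //.
  by case: h2; exists n.+1.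
- move=> [t ht]; apply: sig_ext; rewrite /gv /f /fv /=.
  destruct (excluded_middle_informative (t = e 0)) as [E1|h1]; simpl.
    destruct (excluded_middle_informative (a = a)) as [X|C]; simpl; [by rewrite ?E1|by case: C].
  destruct (excluded_middle_informative (exists n, t = e n.+1)) as [h2|h2]; simpl.
    have hs := @epsilon_spec _ (inhabits 0) (fun n => t = e n.+1) h2.
    move: hs; set n := epsilon _ _ => hs.
    destruct (excluded_middle_informative (e n = a)) as [E|X]; simpl.
      by move: (elt n); rewrite E => /ltirr.
    destruct (excluded_middle_informative (exists m, e n = e m)) as [h3|C]; simpl;
      last by case: C; exists n.
    have hs' := @epsilon_spec _ (inhabits 0) (fun m => e n = e m) h3.
    move: hs'; set m := epsilon _ _ => hs'.
    by move/e_inj: hs' => <-.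
  destruct (excluded_middle_informative (t = a)) as [h3|X]; simpl.
    by move: ht; rewrite h3 => /ltirr.
  destruct (excluded_middle_informative (exists m, t = e m)) as [[[|n] hn]|Y]; simpl => //.
  by case: h2; exists n.
Qed.

Notation tmax := (@tmax T lt).
Let le_tmaxl a b : le a (tmax a b) := @le_tmaxl T lt a b.
Let le_tmaxr a b : le b (tmax a b) := @le_tmaxr T lt Hwo a b.

Definition i0 : 'I_k := Ordinal hk.

Lemma STATC (A C : T -> Prop) : stationary lt A -> Defs.closed lt C ->
  (forall a, exists c, C c /\ lt a c) -> forall a, exists x, A x /\ C x /\ lt a x.
Proof.
move=> HA HCl HC a.
have [x [Ax [Cx hx]]] : exists x, A x /\ (C x /\ lt a x).
  apply: HA; split.
    move=> a0; have [c [Cc hc]] := HC (tmax a a0); exists c; split.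
      by split=> //; exact: (lelt (le_tmaxl a a0) hc).
    by right; exact: (lelt (le_tmaxr a a0) hc).
  move=> a1 [b hb] hcof; split.
    apply: HCl; first by exists b.
    by move=> b' hb'; have [c [[Cc _] hc]] := hcof b' hb'; exists c.
  by have [c [[_ hc] [_ hc']]] := hcof b hb; exact: (lttr hc hc').
by exists x.
Qed.

Lemma STAT (A : T -> Prop) : stationary lt A -> forall a, exists x, A x /\ lt a x.
Proof.
move=> HA a; have [x [Ax [_ hx]]] := @STATC A (fun _ => True) HA
  (fun _ _ _ => I) (fun a => let: ex_intro b hb := nomax a in ex_intro _ b (conj I hb)) a.
by exists x.
Qed.

Lemma seq_from (U : T -> Prop) (hU : forall a, exists u, U u /\ lt a u) s :
  U s -> exists q : nat -> T, q 0 = s /\ (forall n, U (q n)) /\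
    (forall i j, (i < j)%N -> lt (q i) (q j)).
Proof.
move=> Us.
pose q := fix q n := match n with 0 => s | n'.+1 => epsilon inhT (fun u => U u /\ lt (q n') u) end.
have hq n : U (q n.+1) /\ lt (q n) (q n.+1).
  exact: (@epsilon_spec _ inhT (fun u => U u /\ lt (q n) u) (hU (q n))).
exists q; split=> //; split; first by case=> [//|n]; case: (hq n).
move=> i j; elim: j => // j IH; rewrite ltnS leq_eqVlt => /orP [/eqP ->|h].
  by case: (hq j).
exact: (lttr (IH h) (hq j).2).
Qed.

Lemma tuple_from (U : T -> Prop) (hU : forall a, exists u, U u /\ lt a u) s :
  U s -> exists S : 'I_k -> T, incr lt S /\ (forall i, U (S i)) /\ S i0 = s.
Proof.
move=> Us; have [q [q0 [qU qm]]] := seq_from _ hU _ Us.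
exists (fun i => q (val i)); split; last by split.
by move=> i j hij; apply: qm.
Qed.

Lemma incr_min (x : 'I_k -> T) : incr lt x -> forall j, le (x i0) (x j).
Proof.
move=> hx j; case: (posnP (val j)) => hj.
  by left; congr x; apply: val_inj.
by right; apply: hx.
Qed.

Lemma reg_of (f : ('I_k -> T) -> T) :
  (forall x, incr lt x -> lt z (x i0) -> lt (f x) (x i0)) -> regressive_k lt f.
Proof.
move=> H x hx; case: (classic (x i0 = z)) => h.
  by right; exists i0; rewrite h => y; exact: z_spec.
left => j; have hz : lt z (x i0).
  by case: (z_le (x i0)) => // h'; case: h.
exact: (ltle (H x hx hz) (incr_min _ hx j)).
Qed.

Lemma e0 : e 0 = z. Proof. by []. Qed.

Lemma OMEGA : exists w, forall n, lt (e n) w.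
Proof.
apply: NNPP => H.
have all t : exists i, t = e i.
  have [n hn] : exists n, ~ lt (e n) t.
    apply: NNPP => h; apply: H; exists t => n; apply: NNPP => h'; apply: h; by exists n.
  have [i [_ ->]] := cover n (fun i _ => allgt i) t (nlt_le hn).
  by exists i.
pose pred t := if excluded_middle_informative (exists n, t = e n.+1)
  then e (epsilon (inhabits 0) (fun n => t = e n.+1)) else z.
have pred_spec n : pred (e n.+1) = e n.
  rewrite /pred; destruct (excluded_middle_informative (exists m, e n.+1 = e m.+1)) as [h|h].
    have := @epsilon_spec _ (inhabits 0) (fun m => e n.+1 = e m.+1) h.
    by move/e_inj => [<-].
  by case: h; exists n.
have nz t : lt z t -> exists n, t = e n.+1.
  move=> ht; have [[|n] hn] := all t; last by exists n.
  by move: ht; rewrite hn e0 => /ltirr.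
pose f (x : 'I_k -> T) := pred (x i0).
have reg : regressive_k lt f.
  apply: reg_of => x hx hz; have [n hn] := nz _ hz.
  by rewrite /f hn pred_spec; exact: e_lt.
case: Hin => _ /(_ f reg) [A [HA [c Hc]]].
have hU := STAT _ HA.
have [s1 [As1 hs1]] := hU z.
have [S1 [iS1 [AS1 S10]]] := tuple_from _ hU _ As1.
have [s2 [As2 hs2]] := hU s1.
have [S2 [iS2 [AS2 S20]]] := tuple_from _ hU _ As2.
have c1 := Hc S1 iS1 AS1; have c2 := Hc S2 iS2 AS2.
move: c1 c2; rewrite /f S10 S20.
have [n1 e1] := nz _ hs1; have [n2 e2] := nz _ (lttr hs1 hs2).
rewrite e1 e2 !pred_spec => <- /e_inj E; move: hs2; rewrite e1 e2 E.
by move/ltirr.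
Qed.

Lemma GB (I : Type) (iota : I -> T) (w : T) : injective iota -> (forall i, lt (iota i) w) ->
  forall u : I -> T, exists b, forall i, lt (u i) b.
Proof.
move=> iinj iw u; apply: NNPP => H.
have hall b : exists i, le b (u i).
  apply: NNPP => h; apply: H; exists b => i; apply: NNPP => h'; apply: h; exists i.
  exact: nlt_le.
have inhI : inhabited I by have [i _] := hall z; constructor.
pose pick t := epsilon inhI (fun i => le t (u i)).
have pick_spec t : le t (u (pick t)) by apply: (@epsilon_spec _ inhI (fun i => le t (u i))).
pose f (x : 'I_k -> T) := if excluded_middle_informative (lt w (x i0)) then iota (pick (x i0)) else z.
have reg : regressive_k lt f.
  apply: reg_of => x hx hz; rewrite /f.
  by destruct (excluded_middle_informative (lt w (x i0))) as [h|h] => //; exact: (lttr (iw _) h).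
case: Hin => _ /(_ f reg) [A [HA [c Hc]]].
have hU := STAT _ HA.
have [s1 [As1 hs1]] := hU w.
have [S1 [iS1 [AS1 S10]]] := tuple_from _ hU _ As1.
have c1 := Hc S1 iS1 AS1; move: c1; rewrite /f S10.
destruct (excluded_middle_informative (lt w s1)) as [h|h] => // c1.
have [s2 [As2 hs2]] := hU (tmax w (u (pick s1))).
have [S2 [iS2 [AS2 S20]]] := tuple_from _ hU _ As2.
have c2 := Hc S2 iS2 AS2; move: c2; rewrite /f S20.
destruct (excluded_middle_informative (lt w s2)) as [h2|h2]; last first.
  by case: h2; exact: (lelt (le_tmaxl _ _) hs2).
rewrite -c1 => /iinj E.
have := pick_spec s2; rewrite E => /le_nlt; apply.
exact: (lelt (le_tmaxr _ _) hs2).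
Qed.

Lemma BND (h : T -> T -> T) g : exists b, forall a c, le a g -> le c g -> lt (h a c) b.
Proof.
pose I := {a | le a g}.
have [w hw] := nomax g.
have iinj : injective (fun i : I => sval i) by move=> ? ? /sig_ext.
have iw (i : I) : lt (sval i) w by exact: (lelt (svalP i) hw).
have hb (a : I) : exists b, forall c : I, lt (h (sval a) (sval c)) b.
  exact: (GB _ _ _ iinj iw (fun c : I => h (sval a) (sval c))).
pose ba (a : I) := epsilon inhT (fun b => forall c : I, lt (h (sval a) (sval c)) b).
have ba_spec a : forall c : I, lt (h (sval a) (sval c)) (ba a).
  exact: (@epsilon_spec _ inhT (fun b => forall c : I, lt (h (sval a) (sval c)) b) (hb a)).
have [bs hbs] := GB _ _ _ iinj iw ba.
exists bs => a c ha hc.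
exact: (lttr (ba_spec (exist _ a ha) (exist _ c hc)) (hbs (exist _ a ha))).
Qed.

Lemma OMB (u : nat -> T) : exists b, forall n, lt (u n) b.
Proof. have [w hw] := OMEGA; exact: (GB _ _ _ e_inj hw u). Qed.

Let tmax_cases a b : tmax a b = a \/ tmax a b = b := @tmax_cases T lt a b.
Let wf := wo_wf Hwo.

Definition rank (p : T * T) := tmax p.1 p.2.
Definition R (p q : T * T) : Prop := lt (rank p) (rank q) \/
  (rank p = rank q /\ (lt p.1 q.1 \/ (p.1 = q.1 /\ lt p.2 q.2))).

Lemma wfR_aux r a b : rank (a, b) = r -> Acc R (a, b).
Proof.
elim/(well_founded_ind wf): r a b => r IHr a.
elim/(well_founded_ind wf): a => a IHa b.
elim/(well_founded_ind wf): b => b IHb hr.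
constructor => [[a' b']] [h|[h1 [h2|[h2 h3]]]].
- by apply: (IHr (rank (a', b'))) => //; rewrite -hr.
- by apply: (IHa a' h2 b'); rewrite h1.
- simpl in h2; subst a'; by apply: (IHb b' h3); rewrite h1.
Qed.

Lemma wfR : well_founded R.
Proof. by move=> [a b]; apply: (wfR_aux (rank (a, b))). Qed.

Lemma R_bound q p : R q p -> le q.1 (rank p) /\ le q.2 (rank p).
Proof.
have hq : le (rank q) (rank p) -> le q.1 (rank p) /\ le q.2 (rank p).
  by move=> h; split; apply: (lele _ h); [apply: le_tmaxl|apply: le_tmaxr].
case=> [h|[h _]]; apply: hq; [by right|by left].
Qed.

Lemma R_tot p q : p <> q -> R p q \/ R q p.
Proof.
move: p q => [a b] [c d] hne.
case: (lttot (rank (a, b)) (rank (c, d))) => [hr|[h|h]]; [|by left; left|by right; left].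
case: (lttot a c) => [ac|[h|h]]; [|by left; right; split=> //; left|by right; right; split=> //; left].
case: (lttot b d) => [bd|[h|h]]; first by case: hne; rewrite ac bd.
  by left; right; split=> //; right.
by right; right; split=> //; right.
Qed.

Definition code : T * T -> T := Fix wfR (fun _ => T)
  (fun p rec => epsilon inhT (fun t => forall q (H : R q p), rec q H <> t)).

Lemma code_eq p : code p = epsilon inhT (fun t => forall q, R q p -> code q <> t).
Proof.
rewrite /code Fix_eq //.
move=> x f g H; have -> // : f = g.
by apply: functional_extensionality_dep => y; apply: functional_extensionality_dep => h; apply: H.
Qed.

Lemma code_spec p q : R q p -> code q <> code p.
Proof.
move: q; rewrite (code_eq p).
apply: (@epsilon_spec _ inhT (fun t => forall q, R q p -> code q <> t)).
have [b hb] := BND (fun a c => code (a, c)) (rank p).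
exists b => q hq E; have [h1 h2] := R_bound _ _ hq.
by move: (hb _ _ h1 h2); rewrite -surjective_pairing E => /ltirr.
Qed.

Lemma code_inj : injective code.
Proof.
move=> p q E; apply: NNPP => hne.
by case: (R_tot _ _ hne) => h; [apply: (code_spec _ _ h)|apply: (code_spec _ _ h)].
Qed.

Definition G g := forall a b, lt a g -> lt b g -> lt (code (a, b)) g.

Lemma G_closed : Defs.closed lt G.
Proof.
move=> a1 [b0 hb0] hcof x y hx hy.
have hm : lt (tmax x y) a1 by case: (tmax_cases x y) => ->.
have [c [Gc [hmc hc]]] := hcof _ hm.
apply: (lttr _ hc); apply: Gc.
  exact: (lelt (le_tmaxl x y) hmc).
exact: (lelt (le_tmaxr x y) hmc).
Qed.

Lemma G_unb a : exists c, G c /\ lt a c.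
Proof.
pose P g b := lt g b /\ forall x y, le x g -> le y g -> lt (code (x, y)) b.
have hP g : exists b, P g b.
  have [b hb] := BND (fun x y => code (x, y)) g; have [w hw] := nomax g.
  exists (tmax b w); split; first exact: (ltle hw (le_tmaxr _ _)).
  by move=> x y hx hy; exact: (ltle (hb _ _ hx hy) (le_tmaxl _ _)).
pose gam := fix gam n := match n with 0 => a | n'.+1 => epsilon inhT (P (gam n')) end.
have hg n : P (gam n) (gam n.+1) by exact: (@epsilon_spec _ inhT (P (gam n)) (hP _)).
have mono i j : (i <= j)%N -> le (gam i) (gam j).
  elim: j => [|j IH]; first by rewrite leqn0 => /eqP ->; left.
  rewrite leq_eqVlt => /orP [/eqP ->|h]; first by left.
  exact: (lele (IH h) (or_intror (hg j).1)).
have [ub hub] := OMB gam.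
have [g [Pg hmin]] := @least_ex T lt Hwo (fun x => forall n, lt (gam n) x) ub hub.
have below x : lt x g -> exists n, le x (gam n).
  move=> hx; have := hmin x hx => h.
  have [n hn] : exists n, ~ lt (gam n) x.
    by apply: NNPP => H; apply: h => n; apply: NNPP => h'; apply: H; exists n.
  by exists n; exact: (nlt_le hn).
exists g; split; last exact: (Pg 0).
move=> x y hx hy.
have [n hn] := below x hx; have [m hm] := below y hy.
have h1 := lele hn (mono n (maxn n m) (leq_maxl n m)).
have h2 := lele hm (mono m (maxn n m) (leq_maxr n m)).
exact: (lttr ((hg _).2 _ _ h1 h2) (Pg _)).
Qed.

Local Notation J := ({ffun 'I_k -> 'I_k} * 'I_k)%type.
Definition CODE (w : J -> T) : T := foldr (fun j acc => code (w j, acc)) z (enum {: J}).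

Lemma CODE_aux (l : seq J) (w w' : J -> T) :
  foldr (fun j acc => code (w j, acc)) z l = foldr (fun j acc => code (w' j, acc)) z l ->
  forall j, j \in l -> w j = w' j.
Proof.
elim: l => // a l IH /= /code_inj [E1 E2] j; rewrite in_cons => /orP [/eqP ->//|hj].
exact: IH.
Qed.

Lemma CODE_inj w w' : CODE w = CODE w' -> forall j, w j = w' j.
Proof. by move=> E j; apply: (CODE_aux _ _ _ E); rewrite mem_enum. Qed.

Lemma CODE_lt w g : G g -> lt z g -> (forall j, lt (w j) g) -> lt (CODE w) g.
Proof.
move=> Gg zg hw; rewrite /CODE; elim: (enum {: J}) => //= a l IH.
exact: Gg.
Qed.

Section DR.
Variable x : 'I_k -> T.

Definition first (j : 'I_k) := forall l : 'I_k, (l < j)%N -> x l <> x j.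
Definition Aset (i : 'I_k) := [set j : 'I_k | lb (lt (x j) (x i) /\ first j)].
Definition dr (i : 'I_k) := #|Aset i|.

Lemma inA i j : j \in Aset i <-> lt (x j) (x i) /\ first j.
Proof. by rewrite inE; split => /lbP. Qed.

Lemma FO i : exists f, x f = x i /\ first f.
Proof.
have : forall n (i : 'I_k), (val i <= n)%N -> exists f, x f = x i /\ first f; last by apply; exact: leqnn.
elim=> [|n IH] i' hi.
  exists i'; split=> // l hl; move: hi; rewrite leqn0 => /eqP hi; by rewrite hi in hl.
case: (classic (first i')) => hf; first by exists i'.
have [l [hl el]] : exists l : 'I_k, (l < i')%N /\ x l = x i'.
  apply: NNPP => H; apply: hf => l hl el; apply: H; by exists l.
have [f [ef hf']] := IH l (leq_trans hl hi); exists f; split=> //; by rewrite ef.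
Qed.

Lemma dr_lt i j : lt (x i) (x j) -> (dr i < dr j)%N.
Proof.
move=> hij; apply: proper_card; apply/properP; split.
  apply/subsetP => l /inA [h1 h2]; apply/inA; split=> //; exact: (lttr h1 hij).
have [f [ef hf]] := FO i; exists f.
  by apply/inA; rewrite ef; split.
by apply/negP => /inA [h _]; move: h; rewrite ef => /ltirr.
Qed.

Lemma dr_le i j : ~ lt (x i) (x j) -> (dr j <= dr i)%N.
Proof.
move=> h; apply: subset_leq_card; apply/subsetP => l /inA [h1 h2]; apply/inA; split=> //.
exact: (ltle h1 (nlt_le h)).
Qed.

Lemma dr_ltE i j : (dr i < dr j)%N <-> lt (x i) (x j).
Proof.
split; last exact: dr_lt.
move=> h; apply: NNPP => h'; have := dr_le _ _ h'; by rewrite leqNgt h.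
Qed.

Lemma dr_eq i j : dr i = dr j -> x i = x j.
Proof.
move=> E; case: (lttot (x i) (x j)) => [//|[h|h]].
  by have := dr_lt _ _ h; rewrite E ltnn.
by have := dr_lt _ _ h; rewrite E ltnn.
Qed.

Lemma dr_ltk i : (dr i < k)%N.
Proof.
rewrite -[k]card_ord -cardsT; apply: proper_card; apply/properP; split.
  exact: subsetT.
by exists i; [rewrite inE|apply/negP => /inA [/ltirr]].
Qed.

Lemma dr_dense i t : (t < dr i)%N -> exists i', dr i' = t.
Proof.
move=> ht.
pose s := map dr (enum (Aset i)).
have us : uniq s.
  rewrite map_inj_in_uniq ?enum_uniq // => j1 j2; rewrite !mem_enum => /inA [_ f1] /inA [_ f2] E.
  have ex := dr_eq _ _ E.
  case: (ltngtP (val j1) (val j2)) => h; [by case: (f2 _ h)|by case: (f1 _ h) |exact: val_inj].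
have sub : {subset s <= iota 0 (dr i)}.
  move=> n /mapP [j]; rewrite mem_enum => /inA [hj _] ->.
  by rewrite mem_iota /= add0n; apply: dr_lt.
have sz : (size (iota 0 (dr i)) <= size s)%N by rewrite size_iota size_map -cardE.
have [_ E] := uniq_min_size us sub sz.
have : t \in s by rewrite E mem_iota /= add0n.
by move/mapP => [j _ ->]; exists j.
Qed.

End DR.

Lemma eq_iff a b : a = b <-> ~ lt a b /\ ~ lt b a.
Proof.
split; first by move=> ->; split; apply: ltirr.
by move=> [h1 h2]; case: (lttot a b) => [//|[//|//]].
Qed.

Lemma dr_ext (x x' : 'I_k -> T) : (forall i j, lt (x i) (x j) <-> lt (x' i) (x' j)) ->
  forall i, dr x i = dr x' i.
Proof.
move=> H i; rewrite /dr; apply: eq_card => j; rewrite !inE.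
have Eq a b : x a = x b <-> x' a = x' b.
  by rewrite !eq_iff !H.
apply/idP/idP => /lbP [h1 h2]; apply/lbP; split.
- by apply/H.
- by move=> l hl /Eq; apply: h2.
- by apply/H.
- by move=> l hl /Eq; apply: h2.
Qed.

Lemma fin_bound (x : 'I_k -> T) : exists m, forall i, lt (x i) m.
Proof.
have : forall s : seq 'I_k, exists m, forall i, i \in s -> lt (x i) m.
  elim=> [|a s [m hm]]; first by exists z.
  have [w hw] := nomax (x a); exists (tmax m w) => i; rewrite in_cons => /orP [/eqP ->|hi].
    exact: (ltle hw (le_tmaxr _ _)).
  exact: (ltle (hm _ hi) (le_tmaxl _ _)).
move=> /(_ (enum 'I_k)) [m hm]; exists m => i; apply: hm; by rewrite mem_enum.
Qed.

Definition rho (x : 'I_k -> T) : {ffun 'I_k -> 'I_k} := [ffun i => insubd i0 (dr x i)].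

Lemma rhoE x i : val (rho x i) = dr x i.
Proof. by rewrite ffunE val_insubd dr_ltk. Qed.

Lemma DEC (U : T -> Prop) (hU : forall a, exists u, U u /\ lt a u) (x : 'I_k -> T) :
  (forall i, U (x i)) -> exists S : 'I_k -> T, incr lt S /\ (forall t, U (S t)) /\
    (forall i, S (rho x i) = x i) /\ (forall t, exists i, le (x i) (S t)).
Proof.
move=> Ux.
have [m hm] := fin_bound x.
have [b0 [Ub0 hb0]] := hU m.
have [q [q0 [qU qm]]] := seq_from _ hU _ Ub0.
have qge n : le b0 (q n).
  by case: n => [|n]; [rewrite q0; left|rewrite -q0; right; apply: qm].
pose S (t : 'I_k) := if excluded_middle_informative (exists i, dr x i = val t)
  then x (epsilon (inhabits i0) (fun i => dr x i = val t)) else q (val t).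
have Sin t : (exists i, dr x i = val t) -> exists i, dr x i = val t /\ S t = x i.
  move=> h; rewrite /S; destruct (excluded_middle_informative (exists i, dr x i = val t)) as [h'|h'].
    by eexists; split; last reflexivity; exact: (@epsilon_spec _ (inhabits i0) (fun i => dr x i = val t) h).
  by case: h'.
have Sout t : ~ (exists i, dr x i = val t) -> S t = q (val t).
  move=> h; rewrite /S; destruct (excluded_middle_informative (exists i, dr x i = val t)) as [h'|h'].
    by case: h.
  by [].
exists S; split; [|split; [|split]].
- move=> t t' htt'.
  case: (classic (exists i, dr x i = val t')) => h'.
    have [i2 [e2 ->]] := Sin _ h'.
    have ht : exists i, dr x i = val t by apply: (dr_dense x i2); rewrite e2.
    have [i1 [e1 ->]] := Sin _ ht.
    by apply/dr_ltE; rewrite e1 e2.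
  rewrite (Sout _ h').
  case: (classic (exists i, dr x i = val t)) => h.
    have [i1 [e1 ->]] := Sin _ h.
    exact: (lttr (hm i1) (ltle hb0 (qge _))).
  by rewrite (Sout _ h); apply: qm.
- move=> t; case: (classic (exists i, dr x i = val t)) => h.
    by have [i1 [e1 ->]] := Sin _ h.
  by rewrite (Sout _ h).
- move=> i; have h : exists i', dr x i' = val (rho x i) by exists i; rewrite rhoE.
  have [i1 [e1 ->]] := Sin _ h; apply: dr_eq; by rewrite e1 rhoE.
- move=> t; case: (classic (exists i, dr x i = val t)) => h.
    by have [i1 [e1 ->]] := Sin _ h; exists i1; left.
  rewrite (Sout _ h); exists i0; right; exact: (lttr (hm i0) (ltle hb0 (qge _))).
Qed.

Variable g : {ffun 'I_k -> T} -> {ffun 'I_k -> T}.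

Definition xs (S : 'I_k -> T) (r : {ffun 'I_k -> 'I_k}) : {ffun 'I_k -> T} := [ffun i => S (r i)].
Definition rg (S : 'I_k -> T) r := forall j i, lt (g (xs S r) j) (S i).
Definition vv (S : 'I_k -> T) (p : J) : T :=
  if excluded_middle_informative (rg S p.1) then g (xs S p.1) p.2 else z.
Definition FF (S : 'I_k -> T) : T :=
  if excluded_middle_informative (forall i, G (S i) /\ lt z (S i)) then CODE (vv S) else z.

Lemma FF_reg : regressive_k lt FF.
Proof.
apply: reg_of => S hS hz; rewrite /FF.
destruct (excluded_middle_informative (forall i, G (S i) /\ lt z (S i))) as [h|h]; last by [].
apply: CODE_lt; [exact: (h i0).1|exact: hz|] => p; rewrite /vv.
destruct (excluded_middle_informative (rg S p.1)) as [r|r]; [exact: r|exact: hz].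
Qed.

Lemma list_bound (s : seq T) : exists m, forall t, List.In t s -> lt t m.
Proof.
elim: s => [|a s [m hm]]; first by exists z.
have [w hw] := nomax a; exists (tmax m w) => t [<-|ht].
  exact: (ltle hw (le_tmaxr _ _)).
exact: (ltle (hm _ ht) (le_tmaxl _ _)).
Qed.

Lemma main_lemma : exists B : T -> Prop, infinite_pred B /\ at_most_ot k (regressive_value lt g B).
Proof.
case: Hin => _ /(_ FF FF_reg) [A [HA [c Hc]]].
pose Bp t := A t /\ G t /\ lt z t.
have hB a : exists t, Bp t /\ lt a t.
  have cl : Defs.closed lt (fun t => G t /\ lt z t).
    move=> a1 [b hb] hcof; split.
      apply: G_closed; first by exists b.
      by move=> b' hb'; have [c' [[Gc _] hc]] := hcof b' hb'; exists c'.
    by have [c' [[_ hz] [_ hc]]] := hcof b hb; exact: (lttr hz hc).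
  have un a' : exists c', (G c' /\ lt z c') /\ lt a' c'.
    have [c' [Gc hc]] := G_unb (tmax a' z); exists c'; split; first split=> //.
      exact: (lelt (le_tmaxr _ _) hc).
    exact: (lelt (le_tmaxl _ _) hc).
  have [t [At [[Gt zt] ht]]] := STATC _ _ HA cl un a.
  by exists t.
exists Bp; split.
  move=> [s hs]; have [m hm] := list_bound s; have [t [Bt ht]] := hB m.
  by have := hm _ (hs _ Bt); move/(ltasym ht).
have hom S S' : incr lt S -> (forall i, Bp (S i)) -> incr lt S' -> (forall i, Bp (S' i)) ->
    forall p, vv S p = vv S' p.
  move=> iS BS iS' BS'; apply: CODE_inj.
  have E1 := Hc S iS (fun i => (BS i).1); have E2 := Hc S' iS' (fun i => (BS' i).1).
  move: E1 E2; rewrite /FF.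
  destruct (excluded_middle_informative (forall i, G (S i) /\ lt z (S i))) as [h|h];
    last by case: h => i; case: (BS i) => _.
  destruct (excluded_middle_informative (forall i, G (S' i) /\ lt z (S' i))) as [h'|h'];
    last by case: h' => i; case: (BS' i) => _.
  move=> /= E1 /= E2; by rewrite E1 E2.
have key (x : {ffun 'I_k -> T}) : (forall i, Bp (x i)) -> (forall i j, lt (g x i) (x j)) ->
    exists S, incr lt S /\ (forall i, Bp (S i)) /\ forall j, vv S (rho x, j) = g x j.
  move=> Bx rx.
  have [S [iS [BS [Sr Sge]]]] := DEC _ hB x Bx.
  have xsE : xs S (rho x) = x by apply/ffunP => i; rewrite ffunE Sr.
  exists S; split=> //; split=> // j; rewrite /vv /=.
  destruct (excluded_middle_informative (rg S (rho x))) as [r|r]; first by rewrite xsE.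
  case: r => j' t; rewrite xsE; have [i hi] := Sge t; exact: (ltle (rx _ _) hi).
pose wit (y : {y | regressive_value lt g Bp y}) :=
  proj1_sig (constructive_indefinite_description _ (svalP y)).
have wit_spec y : (forall i, Bp (wit y i)) /\ sval y = g (wit y) /\
    forall i j, lt (sval y i) (wit y j).
  exact: (proj2_sig (constructive_indefinite_description _ (svalP y))).
pose nd (x : {ffun 'I_k -> T}) : {ffun 'I_k -> nat} := [ffun i => dr x i].
exists (fun y => exist (@ot_class k) (same_ot (nd (wit y))) (ex_intro _ (nd (wit y)) erefl)).
move=> y1 y2 E; have E' := f_equal sval E; simpl in E'.
have hs : same_ot (nd (wit y1)) (nd (wit y2)) by rewrite E'; move=> i j.
have [B1 [ey1 r1]] := wit_spec y1; have [B2 [ey2 r2]] := wit_spec y2.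
move: hs B1 B2 ey1 ey2 r1 r2; set x1 := wit y1; set x2 := wit y2 => hs B1 B2 ey1 ey2 r1 r2.
have cmp i j : lt (x1 i) (x1 j) <-> lt (x2 i) (x2 j).
  rewrite -(dr_ltE x1) -(dr_ltE x2); have := hs i j; rewrite !ffunE => ->; by [].
have hd := dr_ext _ _ cmp.
have erho : rho x1 = rho x2 by apply/ffunP => i; rewrite !ffunE hd.
have r1' i j : lt (g x1 i) (x1 j) by rewrite -ey1.
have r2' i j : lt (g x2 i) (x2 j) by rewrite -ey2.
have [S1 [iS1 [BS1 v1]]] := key x1 B1 r1'.
have [S2 [iS2 [BS2 v2]]] := key x2 B2 r2'.
apply: sig_ext; rewrite ey1 ey2; apply/ffunP => j.
by rewrite -v1 -v2 erho (hom S1 S2 iS1 BS1 iS2 BS2).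
Qed.
End Main.

Theorem lemma4p10 (T : Type) (lt : T -> T -> Prop) (k : nat) :
  wellorder lt -> (0 < k)%N -> k_ineffable' lt k ->
  forall g : {ffun 'I_k -> T} -> {ffun 'I_k -> T},
  exists B : T -> Prop, infinite_pred B /\
    at_most_ot k (regressive_value lt g B).
Proof.
move=> Hwo hk Hin g; exact: (@main_lemma T lt k Hwo hk Hin g).
Qed.
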